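(* Let $X$ be an $R$-module and $Y\le X$. Then either $\sqrt[M]{Y}=X$, or $\sqrt[M]{Y}$ equals the intersection of all $M$-prime submodules of $X$ containing $Y$.
   Context: $R$ is a ring with identity, modules are unital left $R$-modules, $M$ is a fixed left $R$-module. For $N\le M$ and a module $X$, $N\cdot X$ is the intersection of the kernels of all homomorphisms $X\to W$ where $W$ ranges over modules with $f(N)=0$ for all $f\in\mathrm{Hom}_R(M,W)$ (for $Z\le X$, $N\cdot Z$ is formed regarding $Z$ as a module). A proper submodule $P$ of $X$ is $M$-prime if for all $N\le M$, $Z\le X$, $N\cdot Z\subseteq P$ implies $N\cdot X\subseteq P$ or $Z\subseteq P$. A nonempty set $S\subseteq X\setminus\{0\}$ is an $M$-$m$-system if for every $N\le M$ and all $Y,Z\le X$: if $(Y+Z)\cap S\neq\emptyset$ and $(Y+N\cdot X)\cap S\neq\emptyset$, then $(Y+N\cdot Z)\cap S\neq\emptyset$. For $Y\le X$: if some $M$-prime submodule of $X$ contains $Y$, then $\sqrt[M]{Y}:=\{x\in X:\ \text{every } M\text{-}m\text{-system containing } x \text{ meets } Y\}$; otherwise $\sqrt[M]{Y}:=X$. *)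

(* Defs.v *)
From HB Require Import structures.
From mathcomp Require Import all_boot all_algebra.
Set Implicit Arguments. Unset Strict Implicit. Unset Printing Implicit Defensive.
Import GRing.Theory.
Local Open Scope ring_scope.

Definition submod (R : pzRingType) (X : lmodType R) (A : X -> Prop) : Prop :=
  A 0 /\ forall (r : R) (a b : X), A a -> A b -> A (r *: a + b).

Definition fullset (T : Type) : T -> Prop := fun _ => True.

(* g restricted to the submodule Z is an R-module homomorphism Z -> W
   (i.e. g|_Z is an element of Hom_R(Z, W); values of g outside Z are irrelevant) *)
Definition hom_on (R : pzRingType) (X W : lmodType R) (Z : X -> Prop) (g : X -> W) : Prop :=
  forall (r : R) (a b : X), Z a -> Z b -> g (r *: a + b) = r *: g a + g b.

Definition hom (R : pzRingType) (X W : lmodType R) (g : X -> W) : Prop :=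
  hom_on (@fullset X) g.

Definition annihilated (R : pzRingType) (M : lmodType R) (N : M -> Prop) (W : lmodType R) : Prop :=
  forall f : M -> W, hom f -> forall m, N m -> f m = 0.

(* N . Z  (Z regarded as a module): intersection of the kernels of all
   homomorphisms Z -> W, W ranging over modules with f(N) = 0 for all f : M -> W *)
Definition prodM (R : pzRingType) (M : lmodType R) (N : M -> Prop)
    (X : lmodType R) (Z : X -> Prop) : X -> Prop :=
  fun x => Z x /\
    forall W : lmodType R, annihilated N W ->
      forall g : X -> W, hom_on Z g -> g x = 0.

Definition included (T : Type) (A B : T -> Prop) : Prop := forall x, A x -> B x.

Definition sumset (R : pzRingType) (X : lmodType R) (A B : X -> Prop) : X -> Prop :=
  fun x => exists a b, A a /\ B b /\ x = a + b.

Definition meets (T : Type) (A B : T -> Prop) : Prop := exists x, A x /\ B x.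

Definition Mprime (R : pzRingType) (M X : lmodType R) (P : X -> Prop) : Prop :=
  submod P /\ (exists x, ~ P x) /\
  forall (N : M -> Prop) (Z : X -> Prop), submod N -> submod Z ->
    included (prodM N Z) P ->
    included (prodM N (@fullset X)) P \/ included Z P.

Definition Msystem (R : pzRingType) (M X : lmodType R) (S : X -> Prop) : Prop :=
  (exists x, S x) /\ (forall x, S x -> x <> 0) /\
  forall (N : M -> Prop) (Y Z : X -> Prop), submod N -> submod Y -> submod Z ->
    meets (sumset Y Z) S ->
    meets (sumset Y (prodM N (@fullset X))) S ->
    meets (sumset Y (prodM N Z)) S.

(* The M-radical of Y: if some M-prime submodule contains Y, it is the set of x
   such that every M-m-system containing x meets Y; otherwise it is all of X
   (encoded by the implication: when no M-prime contains Y, every x belongs). *)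
Definition Mrad (R : pzRingType) (M X : lmodType R) (Y : X -> Prop) : X -> Prop :=
  fun x => (exists P : X -> Prop, Mprime M P /\ included Y P) ->
    forall S : X -> Prop, Msystem M S -> S x -> meets S Y.

(* Main.v *)
Require Import Defs.
From HB Require Import structures.
From mathcomp Require Import all_boot all_algebra.
From mathcomp Require Import classical_sets.
From Stdlib Require Import Classical.
Set Implicit Arguments. Unset Strict Implicit. Unset Printing Implicit Defensive.
Import GRing.Theory.
Local Open Scope ring_scope.

Section Aux.
Variables (R : pzRingType) (M X : lmodType R).

Lemma hom0 (W : lmodType R) (Z : X -> Prop) (g : X -> W) :
  hom_on Z g -> Z 0 -> g 0 = 0.
Proof.
move=> hg Z0; have := hg 1 0 0 Z0 Z0; rewrite scaler0 add0r scale1r => h.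
by apply: (addrI (g 0)); rewrite addr0 -h.
Qed.

Lemma prod0 (N : M -> Prop) (Z : X -> Prop) : submod Z -> prodM N Z 0.
Proof. by move=> [Z0 _]; split => // W _ g hg; apply: hom0 hg Z0. Qed.

Lemma prod_submod (N : M -> Prop) (Z : X -> Prop) : submod Z -> submod (prodM N Z).
Proof.
move=> hZ; split; first exact: prod0.
move=> r a b [Za ha] [Zb hb]; split; first by apply: hZ.2.
move=> W hW g hg; rewrite hg // (ha W hW g hg) (hb W hW g hg).
by rewrite scaler0 addr0.
Qed.

Lemma sum_submod (A B : X -> Prop) : submod A -> submod B -> submod (sumset A B).
Proof.
move=> [A0 hA] [B0 hB]; split; first by exists 0, 0; rewrite addr0.
move=> r _ _ [a1 [b1 [Ha1 [Hb1 ->]]]] [a2 [b2 [Ha2 [Hb2 ->]]]].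
exists (r *: a1 + a2), (r *: b1 + b2); split; first exact: hA.
split; first exact: hB.
by rewrite scalerDr addrACA.
Qed.

Lemma submod_add (A : X -> Prop) a b : submod A -> A a -> A b -> A (a + b).
Proof. by move=> hA Ha Hb; have := hA.2 1 a b Ha Hb; rewrite scale1r. Qed.

Lemma compl_msystem (P : X -> Prop) (x : X) :
  Mprime M P -> ~ P x -> Msystem M (fun z => ~ P z).
Proof.
move=> [hP [_ hpr]] nPx; split; first by exists x.
split; first by move=> z nz z0; apply: nz; rewrite z0; exact: hP.1.
move=> N Y Z hN hY hZ [u [[a [b [Ya [Zb ->]]]] nPu]] [v [[c [d [Yc [Nd ->]]]] nPv]].
apply: NNPP => hn.
have sub : included (sumset Y (prodM N Z)) P.
  by move=> w hw; apply: NNPP => nw; apply: hn; exists w.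
have YP : included Y P.
  move=> y Yy; apply: sub; exists y, 0; split => //; split; [exact: prod0 | by rewrite addr0].
have NZP : included (prodM N Z) P.
  move=> z Hz; apply: sub; exists 0, z; split; [exact: hY.1 | split => //; by rewrite add0r].
case: (hpr N Z hN hZ NZP) => [h|h].
- by apply: nPv; apply: submod_add => //; [exact: YP | exact: h].
- by apply: nPu; apply: submod_add => //; [exact: YP | exact: h].
Qed.

End Aux.

Theorem theorem2p17 (R : pzRingType) (M X : lmodType R) (Y : X -> Prop)
    (hY : submod Y) :
  (forall x : X, Mrad M Y x) \/
  (forall x : X, Mrad M Y x <->
     (forall P : X -> Prop, Mprime M P -> included Y P -> P x)).
Proof.
case: (classic (exists P : X -> Prop, Mprime M P /\ included Y P)) => hex; last first.
  by left => x h; exfalso; apply: hex.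
right => x; split.
- move=> hx P hP YP; apply: NNPP => nPx.
  have [y [Sy Yy]] := hx hex _ (compl_msystem hP nPx) nPx.
  by apply: Sy; apply: YP.
- move=> hall _ S hS Sx; apply: NNPP => nmeet.
  pose Fam := fun Q : X -> Prop => Q = (fun _ => False) \/
    (submod Q /\ included Y Q /\ forall z, Q z -> S z -> False).
  have [A [FA maxA]] : exists A, Fam A /\ forall B, proper A B -> ~ Fam B.
    apply: Zorn_bigcup => F FP tot.
    case: (classic (exists Q, F Q /\ exists z, Q z)) => hne; last first.
      left; apply: boolp.funext => z; apply: boolp.propext; split => // -[Q FQ Qz].
      by apply: hne; exists Q; split => //; exists z.
    have good : forall Q z, F Q -> Q z ->
        submod Q /\ included Y Q /\ forall z, Q z -> S z -> False.
      move=> Q z FQ Qz; case: (FP _ FQ) => // e.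
      by rewrite e in Qz.
    have [Q0 [FQ0 [z0 Qz0]]] := hne.
    right; split; [split|split].
    - by exists Q0 => //; exact: (good _ _ FQ0 Qz0).1.1.
    - move=> r a b [Qa FQa Qaa] [Qb FQb Qbb].
      case: (tot _ _ FQa FQb) => sub.
      + exists Qb => //; apply: (good _ _ FQb Qbb).1.2 => //; exact: sub.
      + exists Qa => //; apply: (good _ _ FQa Qaa).1.2 => //; exact: sub.
    - by move=> y Yy; exists Q0 => //; exact: (good _ _ FQ0 Qz0).2.1.
    - by move=> z [Q FQ Qz] Sz; exact: (good _ _ FQ Qz).2.2 z Qz Sz.
  have dis : forall z, Y z -> S z -> False by move=> z Yz Sz; apply: nmeet; exists z.
  have [hA [YA dA]] : submod A /\ included Y A /\ forall z, A z -> S z -> False.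
    case: FA => // eA; exfalso; apply: (maxA Y); last by right; split => //; split => // y.
    rewrite eA; split => // h; exact: h 0 hY.1.
  have maxQ : forall Q, submod Q -> included A Q -> (forall z, Q z -> S z -> False) ->
      included Q A.
    move=> Q hQ AQ dQ; apply: NNPP => nQA; apply: (maxA Q).
      by split => // h; apply: nQA => z; exact: h.
    right; split => //; split => //; move=> y Yy; exact: AQ _ (YA _ Yy).
  have meetsQ : forall Q, submod Q -> included A Q -> ~ included Q A ->
      exists z, Q z /\ S z.
    move=> Q hQ AQ nQA; apply: NNPP => hn; apply: nQA; apply: maxQ => // z Qz Sz.
    by apply: hn; exists z.
  have primeA : Mprime M A.
    split => //; split; first by exists x => Ax; exact: dA x Ax Sx.
    move=> N Z hN hZ NZA; apply: NNPP => /not_or_and [nNX nZ].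
    have AZ : included A (sumset A Z).
      by move=> a Aa; exists a, 0; split => //; split; [exact: hZ.1 | rewrite addr0].
    have AN : included A (sumset A (prodM N (@fullset X))).
      move=> a Aa; exists a, 0; split => //; split; last by rewrite addr0.
      by apply: prod0; split; [done | by move=> *].
    have m1 : Defs.meets (sumset A Z) S.
      apply: meetsQ => //; first exact: sum_submod.
      move=> h; apply: nZ => z Zz; apply: h; exists 0, z; split; first exact: hA.1.
      by split => //; rewrite add0r.
    have m2 : Defs.meets (sumset A (prodM N (@fullset X))) S.
      apply: meetsQ => //; first by apply: sum_submod => //; apply: prod_submod.
      move=> h; apply: nNX => z Zz; apply: h; exists 0, z; split; first exact: hA.1.
      by split => //; rewrite add0r.
    have [w [[a [b [Aa [Nb ->]]]] Sw]] := hS.2.2 N A Z hN hA hZ m1 m2.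
    exfalso; apply: (dA _ _ Sw); apply: submod_add => //; exact: NZA.
  exact: dA x (hall A primeA YA) Sx.
Qed.
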